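(* Under the assumptions of the explicit-formulae proposition (piecewise linear concave non-positive increasing $v$ on grid $x_1<\dots<x_N$, $-\infty$ below $x_1$ and constant above $x_N$; $u$ concave increasing with $u^\dagger$ continuous on $(0,\infty)$ and $\lim_{p\to0}u^\dagger(p)=\infty$; $s\in(0,1)$), $\lim_{\eta\to0}X^\eta=\infty$.
   Context: $\Phi$ is the standard normal distribution function, $M=|\mu-r|\sqrt{\delta t}/\sigma$, $Q(x)=\Phi(M+\Phi^{-1}(x))$, $q^A_{BS}=Q'$. For concave increasing $g$, $g^\dagger(p)=\inf\{x:p\in\partial g(x)\}$, $\partial g$ the superdifferential. $C\in\{0,1\}$. For $\eta>0$: $f^\eta(x)=v^\dagger(\eta s^{C-1}e^{-r\delta t}q^A_{BS}(x))$, $\gamma^\eta=u^\dagger\big(-\frac{\eta}{\delta t}\big(-1+s\int_0^1(1+v(f^\eta(x)))\mathrm dx\big)^{-1}\big)$, $X^\eta=\gamma^\eta+s^C\int_0^1e^{-r\delta t}q^A_{BS}(x)f^\eta(x)\mathrm dx$. *)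

(* Defs.v *)
From Stdlib Require Import Reals Lra ClassicalEpsilon.
Open Scope R_scope.

(* Hilbert choice of a real satisfying P (arbitrary if none exists). *)
Definition choose_R (P : R -> Prop) : R := epsilon (inhabits 0) P.

Definition phi_density (t : R) : R := / sqrt (2 * PI) * exp (- (t ^ 2) / 2).

Definition int_minf_to (f : R -> R) (x l : R) : Prop :=
  forall eps, 0 < eps -> exists A, forall a, a < A ->
    exists pr : Riemann_integrable f a x, Rabs (RiemannInt pr - l) < eps.

Definition Phi (x : R) : R := choose_R (int_minf_to phi_density x).
Definition Phi_inv (p : R) : R := choose_R (fun y => Phi y = p).

Definition deriv_val (f : R -> R) (x : R) : R := choose_R (derivable_pt_lim f x).

Definition improper_int (f : R -> R) (a b l : R) : Prop :=
  forall eps, 0 < eps -> exists d, 0 < d /\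
    forall a' b', a < a' < a + d -> b - d < b' < b ->
      exists pr : Riemann_integrable f a' b', Rabs (RiemannInt pr - l) < eps.

Definition Int (f : R -> R) (a b : R) : R := choose_R (improper_int f a b).

Definition Mpar (mu r sigma dt : R) : R := Rabs (mu - r) * sqrt dt / sigma.
Definition Qfun (mu r sigma dt : R) (x : R) : R := Phi (Mpar mu r sigma dt + Phi_inv x).
Definition qBS (mu r sigma dt : R) (x : R) : R := deriv_val (Qfun mu r sigma dt) x.

(* superdifferential of a concave g with effective domain D (g = -oo off D) *)
Definition superdiff (D : R -> Prop) (g : R -> R) (x p : R) : Prop :=
  D x /\ forall y, D y -> g y <= g x + p * (y - x).

Definition is_inf (E : R -> Prop) (m : R) : Prop :=
  (forall x, E x -> m <= x) /\ (forall b, (forall x, E x -> b <= x) -> b <= m).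
Definition Rinf (E : R -> Prop) : R := choose_R (is_inf E).

Definition dagger (D : R -> Prop) (g : R -> R) (p : R) : R :=
  Rinf (fun x => superdiff D g x p).

Definition fullR : R -> Prop := fun _ => True.

(* f^eta, gamma^eta, X^eta ; v has effective domain [x_1, oo) where x_1 = xs 0 *)
Definition f_eta (mu r sigma dt s : R) (C : nat) (x1 : R) (v : R -> R)
    (eta x : R) : R :=
  dagger (fun y => x1 <= y) v
    (eta * powerRZ s (Z.of_nat C - 1) * exp (- r * dt) * qBS mu r sigma dt x).

Definition gamma_eta (mu r sigma dt s : R) (C : nat) (x1 : R) (v u : R -> R)
    (eta : R) : R :=
  dagger fullR u
    (- (eta / dt) *
       / (-1 + s * Int (fun x => 1 + v (f_eta mu r sigma dt s C x1 v eta x)) 0 1)).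

Definition X_eta (mu r sigma dt s : R) (C : nat) (x1 : R) (v u : R -> R)
    (eta : R) : R :=
  gamma_eta mu r sigma dt s C x1 v u eta
  + s ^ C * Int (fun x => exp (- r * dt) * qBS mu r sigma dt x
                           * f_eta mu r sigma dt s C x1 v eta x) 0 1.

(* Main.v *)
Require Import Defs.
From Coquelicot Require Import Coquelicot.
From Stdlib Require Import Reals Lra Lia Classical ClassicalEpsilon FunctionalExtensionality Ranalysis5.
Require Import Defs.
Open Scope R_scope.

Lemma exRc : forall (f : R -> R) a b, (forall z, Rmin a b <= z <= Rmax a b -> continuous f z) -> ex_RInt f a b.
Proof. intros f a b H. apply (@ex_RInt_continuous R_CompleteNormedModule). exact H. Qed.

Definition gf (t : R) := exp (- (t * t)).
Definition Ig (y : R) := RInt gf 0 y.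

Lemma gf_cont : forall x, continuous gf x.
Proof. intros x; apply (ex_derive_continuous (K:=R_AbsRing) (V:=R_NormedModule)); unfold gf; auto_derive; auto. Qed.

Lemma gf_pos : forall x, 0 < gf x.
Proof. intros; apply exp_pos. Qed.

Lemma ex_RInt_gf : forall a b, ex_RInt gf a b.
Proof. intros; apply exRc; intros; apply gf_cont. Qed.

Lemma Ig_deriv : forall y, is_derive Ig y (gf y).
Proof.
  intros y. apply (is_derive_RInt gf Ig 0 y).
  - apply filter_forall. intros b. apply (@RInt_correct R_CompleteNormedModule), ex_RInt_gf.
  - apply gf_cont.
Qed.

Definition kf (x t : R) := exp (- (x * x) * (1 + t * t)) / (1 + t * t).
Definition Jg (x : R) := RInt (fun t => kf x t) 0 1.

Lemma onett_pos : forall t, 0 < 1 + t * t.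
Proof. intros; nra. Qed.

Lemma kf_dx : forall x t, is_derive (fun u => kf u t) x (- 2 * x * exp (- (x * x) * (1 + t * t))).
Proof.
  intros x t. unfold kf. auto_derive. 
  - pose proof (onett_pos t); lra.
  - field. pose proof (onett_pos t); lra.
Qed.

Lemma kf_cont : forall x t, continuous (fun t => kf x t) t.
Proof. intros x t. apply (ex_derive_continuous (K:=R_AbsRing) (V:=R_NormedModule)). unfold kf. auto_derive. pose proof (onett_pos t); lra. Qed.

Lemma Jg_deriv : forall x : R, is_derive Jg x (- 2 * gf x * Ig x).
Proof.
  intros x.
  assert (HD : forall u v, Derive (fun z => kf z v) u = - 2 * u * exp (- (u * u) * (1 + v * v))).
  { intros; apply is_derive_unique, kf_dx. }
  assert (H := is_derive_RInt_param_aux kf 0 1 x).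
  unfold Jg.
  replace (- 2 * gf x * Ig x) with (RInt (fun t => Derive (fun u => kf u t) x) 0 1).
  - apply H.
    + apply filter_forall. intros x0 t _. eexists; apply kf_dx.
    + intros t _. eapply continuity_2d_pt_ext.
      { intros u v; symmetry; apply HD. }
      apply continuity_2d_pt_mult.
      * apply continuity_2d_pt_mult. apply continuity_2d_pt_const. apply continuity_2d_pt_id1.
      * apply continuity_1d_2d_pt_comp. apply derivable_continuous_pt, derivable_exp.
        apply continuity_2d_pt_mult.
        apply continuity_2d_pt_opp, continuity_2d_pt_mult; apply continuity_2d_pt_id1.
        apply continuity_2d_pt_plus. apply continuity_2d_pt_const.
        apply continuity_2d_pt_mult; apply continuity_2d_pt_id2.
    + apply filter_forall. intros y. apply exRc. intros; apply kf_cont.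
    + eapply ex_RInt_ext. { intros t _; symmetry; apply HD. }
      apply exRc. intros z _. apply (ex_derive_continuous (K:=R_AbsRing) (V:=R_NormedModule)). auto_derive. auto.
  - rewrite (RInt_ext _ (fun t => scal (- 2 * x * exp (- (x * x))) (gf (x * t + 0)))).
    2:{ intros t _. rewrite HD. unfold gf, scal; simpl; unfold mult; simpl.
        replace (exp (- (x*x)*(1+t*t))) with (exp (-(x*x)) * exp (-((x*t+0)*(x*t+0)))) by (rewrite <- exp_plus; f_equal; ring). ring. }
    rewrite (@RInt_scal R_CompleteNormedModule).
    2:{ apply exRc. intros; apply (ex_derive_continuous (K:=R_AbsRing) (V:=R_NormedModule)); unfold gf; auto_derive; auto. }
    destruct (Req_dec x 0) as [Hx|Hx].
    + subst x. unfold scal; simpl; unfold mult; simpl. unfold Ig. rewrite (@RInt_point R_CompleteNormedModule). unfold zero; simpl. ring.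
    + assert (E : RInt (fun t => gf (x * t + 0)) 0 1 = / x * Ig x).
      { unfold Ig. assert (E2 : RInt (fun y => scal x (gf (x*y+0))) 0 1 = RInt gf 0 x).
        { rewrite (@RInt_comp_lin R_CompleteNormedModule). replace (x * 0 + 0) with 0 by ring. replace (x * 1 + 0) with x by ring. reflexivity. replace (x * 0 + 0) with 0 by ring. replace (x * 1 + 0) with x by ring. apply ex_RInt_gf. }
        rewrite <- E2. rewrite (@RInt_scal R_CompleteNormedModule).
        - unfold scal; simpl; unfold mult; simpl. assert (Hw : forall w : R, w = / x * (x * w)) by (intros; field; auto). apply Hw.
        - apply exRc. intros; apply (ex_derive_continuous (K:=R_AbsRing) (V:=R_NormedModule)); unfold gf; auto_derive; auto. }
      rewrite E. unfold scal; simpl; unfold mult; simpl. unfold gf. field. auto.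
Qed.

Lemma exp_le_mono : forall a b, a <= b -> exp a <= exp b.
Proof. intros a b H. destruct (Rle_lt_or_eq_dec _ _ H). apply Rlt_le, exp_increasing; auto. subst; lra. Qed.

Lemma dpl_Ig : forall y, derivable_pt_lim Ig y (gf y).
Proof. intros; apply is_derive_Reals, Ig_deriv. Qed.
Lemma dpl_Jg : forall y, derivable_pt_lim Jg y (- 2 * gf y * Ig y).
Proof. intros; apply is_derive_Reals, Jg_deriv. Qed.

Lemma cont_of_dpl : forall f x l, derivable_pt_lim f x l -> continuity_pt f x.
Proof. intros f x l H. apply derivable_continuous_pt. exists l; exact H. Qed.

Lemma const_of_deriv0 : forall (h : R -> R), (forall y, derivable_pt_lim h y 0) -> forall y, h y = h 0.
Proof.
  intros h H y.
  destruct (MVT_gen h 0 y (fun _ => 0)) as [c [_ Hc]].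
  - intros; apply is_derive_Reals, H.
  - intros; eapply cont_of_dpl, H.
  - lra.
Qed.

Lemma Jg0 : Jg 0 = PI / 4.
Proof.
  unfold Jg. rewrite <- atan_1.
  replace (atan 1) with (atan 1 - atan 0) by (rewrite atan_0; ring).
  apply is_RInt_unique.
  eapply is_RInt_ext.
  2:{ apply (@is_RInt_derive R_CompleteNormedModule atan (fun t => / (1 + t ^ 2))).
      - intros; apply is_derive_Reals, derivable_pt_lim_atan.
      - intros. apply (ex_derive_continuous (K:=R_AbsRing) (V:=R_NormedModule)). auto_derive. nra. }
  intros t _. unfold kf. simpl. replace (- (0 * 0) * (1 + t * t)) with 0 by ring. rewrite exp_0. field. nra.
Qed.

Lemma IJ : forall y, Ig y * Ig y + Jg y = PI / 4.
Proof.
  intros y. rewrite (const_of_deriv0 (fun y => Ig y * Ig y + Jg y)).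
  - unfold Ig at 1 2. rewrite (@RInt_point R_CompleteNormedModule). rewrite Jg0. unfold zero; simpl. ring.
  - intros z. replace 0 with (gf z * Ig z + Ig z * gf z + (- 2 * gf z * Ig z)) by ring.
    apply derivable_pt_lim_plus. apply derivable_pt_lim_mult; apply dpl_Ig. apply dpl_Jg.
Qed.

Lemma Jg_bounds : forall y, 0 <= Jg y <= exp (- (y * y)).
Proof.
  intros y. assert (Hex : ex_RInt (fun t => kf y t) 0 1) by (apply exRc; intros; apply kf_cont).
  split.
  - unfold Jg. apply RInt_ge_0. lra. exact Hex.
    intros; unfold kf. apply Rlt_le, Rdiv_lt_0_compat. apply exp_pos. apply onett_pos.
  - unfold Jg. replace (exp (- (y*y))) with (RInt (fun _ => exp (- (y*y))) 0 1).
    + apply RInt_le. lra. exact Hex. apply ex_RInt_const.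
      intros t Ht. unfold kf. pose proof (onett_pos t).
      apply Rle_trans with (exp (- (y * y) * (1 + t * t))).
      * unfold Rdiv. rewrite <- (Rmult_1_r (exp (- (y * y) * (1 + t * t)))) at 2.
        apply Rmult_le_compat_l. apply Rlt_le, exp_pos.
        rewrite <- Rinv_1. apply Rinv_le_contravar. lra. nra.
      * apply exp_le_mono. nra.
    + rewrite RInt_const. unfold scal; simpl; unfold mult; simpl. ring.
Qed.

Lemma Ig_odd : forall y, Ig (- y) = - Ig y.
Proof.
  intros y. assert (H := const_of_deriv0 (fun y => Ig (- y) + Ig y)).
  simpl in H. rewrite Ropp_0 in H.
  assert (H0 : Ig 0 = 0) by (unfold Ig; rewrite (@RInt_point R_CompleteNormedModule); reflexivity).
  rewrite H0 in H. assert (Ig (- y) + Ig y = 0). { rewrite H. ring.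
    intros z. replace 0 with (gf (- z) * (- 1) + gf z) by (unfold gf; replace (- z * - z) with (z * z) by ring; ring).
    apply derivable_pt_lim_plus. 2: apply dpl_Ig.
    apply (derivable_pt_lim_comp (fun z => - z) Ig). 
    replace (-1) with (- (1)) by ring. apply derivable_pt_lim_opp, derivable_pt_lim_id. apply dpl_Ig. }
  lra.
Qed.

Lemma Ig_incr : forall a b, a < b -> Ig a < Ig b.
Proof.
  intros a b H. unfold Ig.
  rewrite <- (RInt_Chasles gf 0 a b) by apply ex_RInt_gf.
  assert (0 < RInt gf a b).
  { apply RInt_gt_0. auto. intros; apply gf_pos. intros; apply gf_cont. }
  simpl. unfold plus; simpl. lra.
Qed.

Lemma Ig_nonneg : forall y, 0 <= y -> 0 <= Ig y.
Proof.
  intros y H. destruct (Rle_lt_or_eq_dec _ _ H).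
  - assert (Ig 0 = 0) by (unfold Ig; rewrite (@RInt_point R_CompleteNormedModule); reflexivity).
    pose proof (Ig_incr 0 y r). lra.
  - subst. unfold Ig; rewrite (@RInt_point R_CompleteNormedModule); right; reflexivity.
Qed.

Definition sP := sqrt PI / 2.

Lemma sP_pos : 0 < sP.
Proof. unfold sP. pose proof (sqrt_lt_R0 PI PI_RGT_0). lra. Qed.

Lemma sP_sq : sP * sP = PI / 4.
Proof. unfold sP. pose proof (sqrt_sqrt PI (Rlt_le _ _ PI_RGT_0)). nra. Qed.

Lemma Ig_tail : forall y, 0 <= y -> 0 <= sP - Ig y <= exp (- (y * y)) / sP.
Proof.
  intros y Hy. pose proof (IJ y). pose proof (Jg_bounds y). pose proof (Ig_nonneg y Hy).
  pose proof sP_sq. pose proof sP_pos.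
  assert (Hp : (sP - Ig y) * (sP + Ig y) = Jg y) by nra.
  assert (0 <= sP - Ig y).
  { destruct (Rle_or_lt 0 (sP - Ig y)); auto. nra. }
  split; auto.
  apply Rle_trans with (Jg y / sP).
  - apply Rmult_le_reg_r with sP; auto. unfold Rdiv. rewrite Rmult_assoc, Rinv_l by lra. nra.
  - unfold Rdiv. apply Rmult_le_compat_r. left; apply Rinv_0_lt_compat; auto. tauto.
Qed.

Lemma exp_small : forall eps, 0 < eps -> exists Y, 0 < Y /\ forall y, Y < Rabs y -> exp (- (y * y)) < eps.
Proof.
  intros eps He. exists (1 + / eps). split. pose proof (Rinv_0_lt_compat _ He); lra.
  intros y Hy.
  assert (Hye : 1 + y * y <= exp (y * y)) by apply exp_ineq1_le.
  assert (Hy2 : Rabs y * Rabs y = y * y) by (rewrite <- Rabs_mult; apply Rabs_pos_eq; nra).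
  pose proof (Rinv_0_lt_compat _ He).
  assert (H1 : / eps < y * y) by nra.
  rewrite exp_Ropp.
  apply Rmult_lt_reg_r with (exp (y * y)). apply exp_pos.
  rewrite Rinv_l by (apply Rgt_not_eq, exp_pos).
  apply Rmult_lt_reg_l with (/ eps); auto.
  rewrite <- Rmult_assoc, Rinv_l by lra. nra.
Qed.

Lemma choose_spec : forall (P : R -> Prop), (exists x, P x) -> P (choose_R P).
Proof. intros P H. unfold choose_R. apply epsilon_spec. exact H. Qed.

Lemma sqrt2_pos : 0 < sqrt 2.
Proof. apply sqrt_lt_R0; lra. Qed.
Lemma sqrt2_sq : sqrt 2 * sqrt 2 = 2.
Proof. apply sqrt_sqrt; lra. Qed.
Lemma sqrtPI_pos : 0 < sqrt PI.
Proof. apply sqrt_lt_R0, PI_RGT_0. Qed.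
Lemma sqrtPI_sq : sqrt PI * sqrt PI = PI.
Proof. apply sqrt_sqrt; left; apply PI_RGT_0. Qed.

Definition Pf (x : R) := / 2 + Ig (x / sqrt 2) / sqrt PI.

Lemma phi_cont : forall x, continuous phi_density x.
Proof. intros. apply (ex_derive_continuous (K:=R_AbsRing) (V:=R_NormedModule)). unfold phi_density. auto_derive. auto. Qed.

Lemma phi_pos : forall x, 0 < phi_density x.
Proof.
  intros. unfold phi_density. apply Rmult_lt_0_compat. apply Rinv_0_lt_compat, sqrt_lt_R0.
  pose proof PI_RGT_0; lra. apply exp_pos.
Qed.

Lemma dpl_eq : forall f x l l', derivable_pt_lim f x l -> l = l' -> derivable_pt_lim f x l'.
Proof. intros; subst; auto. Qed.

Lemma Pf_deriv : forall x, derivable_pt_lim Pf x (phi_density x).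
Proof.
  intros x. unfold Pf.
  assert (H : derivable_pt_lim (fun x => Ig (x / sqrt 2)) x (gf (x / sqrt 2) * (1 * / sqrt 2))).
  { apply (derivable_pt_lim_comp (fun x => x / sqrt 2) Ig).
    - unfold Rdiv. apply (derivable_pt_lim_scal_right (fun y => y)). apply derivable_pt_lim_id.
    - apply dpl_Ig. }
  eapply dpl_eq.
  - apply (derivable_pt_lim_plus (fun _ => / 2) (fun x => Ig (x / sqrt 2) / sqrt PI)).
    apply derivable_pt_lim_const.
    unfold Rdiv at 2. apply (derivable_pt_lim_scal_right (fun x => Ig (x / sqrt 2))). exact H.
  - unfold phi_density, gf. rewrite sqrt_mult by (pose proof PI_RGT_0; lra).
    pose proof sqrt2_pos. pose proof sqrtPI_pos.
    replace (- (x / sqrt 2 * (x / sqrt 2))) with (- x ^ 2 / 2).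
    + field. lra.
    + replace (x / sqrt 2 * (x / sqrt 2)) with (x * x / (sqrt 2 * sqrt 2)) by (field; lra).
      rewrite sqrt2_sq. field.
Qed.

Lemma Pf_cont : forall x, continuity_pt Pf x.
Proof. intros. apply derivable_continuous_pt. exists (phi_density x). apply Pf_deriv. Qed.

Lemma Pf_as : forall x, Pf x = (sP + Ig (x / sqrt 2)) / sqrt PI.
Proof. intros. unfold Pf, sP. pose proof sqrtPI_pos. field. lra. Qed.

Lemma Pf_incr : forall a b, a < b -> Pf a < Pf b.
Proof.
  intros a b H. rewrite !Pf_as. pose proof sqrtPI_pos. pose proof sqrt2_pos.
  assert (a / sqrt 2 < b / sqrt 2). { unfold Rdiv. apply Rmult_lt_compat_r; [apply Rinv_0_lt_compat; lra | lra]. }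
  pose proof (Ig_incr _ _ H2). unfold Rdiv. apply Rmult_lt_compat_r; [apply Rinv_0_lt_compat; lra | lra].
Qed.

Definition tailc := / (sP * sqrt PI).

Lemma Pf_neg : forall x, x <= 0 -> 0 <= Pf x <= exp (- ((x / sqrt 2) * (x / sqrt 2))) * tailc.
Proof.
  intros x Hx. rewrite Pf_as. pose proof sqrtPI_pos. pose proof sqrt2_pos. pose proof sP_pos.
  set (y := x / sqrt 2).
  assert (Hy : y <= 0). { unfold y, Rdiv. assert (0 < / sqrt 2) by (apply Rinv_0_lt_compat; lra). nra. }
  destruct (Ig_tail (- y)) as [A B]. lra.
  rewrite Ig_odd in A, B. replace (- y * - y) with (y * y) in B by ring.
  unfold tailc. rewrite Rinv_mult. split.
  - apply Rmult_le_pos. lra. left; apply Rinv_0_lt_compat; lra.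
  - unfold Rdiv. rewrite <- Rmult_assoc. apply Rmult_le_compat_r. left; apply Rinv_0_lt_compat; lra.
    unfold Rdiv in B. lra.
Qed.

Lemma Pf_posside : forall x, 0 <= x -> 0 <= 1 - Pf x <= exp (- ((x / sqrt 2) * (x / sqrt 2))) * tailc.
Proof.
  intros x Hx. rewrite Pf_as. pose proof sqrtPI_pos. pose proof sqrt2_pos. pose proof sP_pos.
  set (y := x / sqrt 2).
  assert (Hy : 0 <= y). { unfold y, Rdiv. assert (0 < / sqrt 2) by (apply Rinv_0_lt_compat; lra). nra. }
  destruct (Ig_tail y Hy) as [A B].
  replace (1 - (sP + Ig y) / sqrt PI) with ((sP - Ig y) / sqrt PI) by (unfold sP; field; lra).
  unfold tailc. rewrite Rinv_mult. split.
  - apply Rmult_le_pos. lra. left; apply Rinv_0_lt_compat; lra.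
  - unfold Rdiv. rewrite <- Rmult_assoc. apply Rmult_le_compat_r. left; apply Rinv_0_lt_compat; lra.
    unfold Rdiv in B. lra.
Qed.

Lemma tailc_pos : 0 < tailc.
Proof. unfold tailc. apply Rinv_0_lt_compat, Rmult_lt_0_compat. apply sP_pos. apply sqrtPI_pos. Qed.

Lemma tail_small : forall eps, 0 < eps -> exists Y, 0 < Y /\ forall x, Y < Rabs x ->
  exp (- ((x / sqrt 2) * (x / sqrt 2))) * tailc < eps.
Proof.
  intros eps He. pose proof tailc_pos.
  destruct (exp_small (eps / tailc)) as [Y [HY HH]]. apply Rdiv_lt_0_compat; auto.
  exists (2 * Y). split. lra. intros x Hx.
  assert (Hs : sqrt 2 < 2). { pose proof sqrt2_sq. pose proof sqrt2_pos. nra. }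
  assert (Y < Rabs (x / sqrt 2)).
  { unfold Rdiv. rewrite Rabs_mult, (Rabs_pos_eq (/ sqrt 2)). 
    2: left; apply Rinv_0_lt_compat, sqrt2_pos.
    pose proof sqrt2_pos.
    apply Rmult_lt_reg_r with (sqrt 2); auto. rewrite Rmult_assoc, Rinv_l by lra. nra. }
  specialize (HH _ H0). apply Rmult_lt_reg_r with (/ tailc). apply Rinv_0_lt_compat; auto.
  rewrite Rmult_assoc, Rinv_r by lra. unfold Rdiv in HH. lra.
Qed.

Lemma Pf_minf : forall eps, 0 < eps -> exists A, A < 0 /\ forall a, a < A -> 0 <= Pf a < eps.
Proof.
  intros eps He. destruct (tail_small eps He) as [Y [HY HH]]. exists (- Y). split. lra.
  intros a Ha. destruct (Pf_neg a) as [A B]. lra. split; auto.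
  eapply Rle_lt_trans. apply B. apply HH. rewrite Rabs_left; lra.
Qed.

Lemma Pf_pinf : forall eps, 0 < eps -> exists B, 0 < B /\ forall b, B < b -> 1 - eps < Pf b <= 1.
Proof.
  intros eps He. destruct (tail_small eps He) as [Y [HY HH]]. exists Y. split. lra.
  intros b Hb. destruct (Pf_posside b) as [A B]. lra. 
  assert (exp (- (b / sqrt 2 * (b / sqrt 2))) * tailc < eps) by (apply HH; rewrite Rabs_right; lra).
  lra.
Qed.

Lemma Pf_range : forall x, 0 < Pf x < 1.
Proof.
  intros x. split.
  - destruct (Rle_or_lt x 0).
    + pose proof (Pf_incr (x - 1) x ltac:(lra)). destruct (Pf_neg (x - 1)); lra.
    + pose proof (Pf_incr 0 x H). destruct (Pf_neg 0); lra.
  - destruct (Rle_or_lt 0 x).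
    + pose proof (Pf_incr x (x + 1) ltac:(lra)). destruct (Pf_posside (x + 1)); lra.
    + pose proof (Pf_incr x 0 H). destruct (Pf_posside 0); lra.
Qed.

Lemma Pf_int : forall a b, ex_RInt phi_density a b /\ RInt phi_density a b = Pf b - Pf a.
Proof.
  intros a b. assert (H : is_RInt phi_density a b (minus (Pf b) (Pf a))).
  { apply (@is_RInt_derive R_CompleteNormedModule).
    - intros; apply is_derive_Reals, Pf_deriv.
    - intros; apply phi_cont. }
  split. eexists; exact H. apply (@is_RInt_unique R_CompleteNormedModule) in H. rewrite H. reflexivity.
Qed.

Lemma close_eq : forall l l', (forall eps, 0 < eps -> Rabs (l - l') < 2 * eps) -> l = l'.
Proof.
  intros l l' H. destruct (Req_dec l l') as [E|E]; auto.
  assert (0 < Rabs (l - l')) by (apply Rabs_pos_lt; lra).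
  specialize (H (Rabs (l - l') / 4) ltac:(lra)). lra.
Qed.

Lemma int_minf_unique : forall f x l l', int_minf_to f x l -> int_minf_to f x l' -> l = l'.
Proof.
  intros f x l l' H1 H2. apply close_eq. intros eps He.
  destruct (H1 eps He) as [A1 HA1]. destruct (H2 eps He) as [A2 HA2].
  destruct (HA1 (Rmin A1 A2 - 1)) as [pr1 E1]. pose proof (Rmin_l A1 A2); lra.
  destruct (HA2 (Rmin A1 A2 - 1)) as [pr2 E2]. pose proof (Rmin_r A1 A2); lra.
  rewrite (RiemannInt_P5 pr1 pr2) in E1.
  replace (l - l') with (- (RiemannInt pr2 - l) + (RiemannInt pr2 - l')) by ring.
  eapply Rle_lt_trans. apply Rabs_triang. rewrite Rabs_Ropp. lra.
Qed.

Lemma Phi_eq : forall x, Phi x = Pf x.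
Proof.
  intros x. assert (H : int_minf_to phi_density x (Pf x)).
  { intros eps He. destruct (Pf_minf eps He) as [A [HA HH]].
    exists (Rmin A x). intros a Ha.
    destruct (Pf_int a x) as [Hex Hv].
    exists (ex_RInt_Reals_0 _ _ _ Hex). rewrite <- RInt_Reals, Hv.
    replace (Pf x - Pf a - Pf x) with (- Pf a) by ring. rewrite Rabs_Ropp.
    destruct (HH a). pose proof (Rmin_l A x); lra. rewrite Rabs_pos_eq; lra. }
  unfold Phi. apply (int_minf_unique phi_density x). apply choose_spec. eexists; exact H. exact H.
Qed.

Lemma Phi_fun : Phi = Pf.
Proof. apply functional_extensionality, Phi_eq. Qed.

Lemma Pf_surj : forall p, 0 < p < 1 -> exists y, Pf y = p.
Proof.
  intros p Hp. destruct (Pf_minf p) as [A [HA HH]]. lra.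
  destruct (Pf_pinf (1 - p)) as [B [HB HB2]]. lra.
  assert (H1 : Pf (A - 1) - p < 0) by (destruct (HH (A - 1)); lra).
  assert (H2 : 0 < Pf (B + 1) - p) by (destruct (HB2 (B + 1)); lra).
  destruct (IVT (fun y => Pf y - p) (A - 1) (B + 1)) as [z [_ Hz]].
  - intros y. apply continuity_pt_minus. apply Pf_cont. apply continuity_pt_const. intros u v; auto.
  - lra.
  - exact H1.
  - exact H2.
  - exists z. lra.
Qed.

Lemma Pinv_spec : forall p, 0 < p < 1 -> Pf (Phi_inv p) = p.
Proof.
  intros p Hp. unfold Phi_inv. rewrite Phi_fun. apply (choose_spec (fun y => Pf y = p)).
  apply Pf_surj; auto.
Qed.

Lemma Pf_le : forall a b, a <= b -> Pf a <= Pf b.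
Proof. intros a b H. destruct (Rle_lt_or_eq_dec _ _ H). left; apply Pf_incr; auto. subst; lra. Qed.

Lemma Pf_inj_le : forall a b, Pf a <= Pf b -> a <= b.
Proof. intros a b H. destruct (Rle_or_lt a b); auto. pose proof (Pf_incr _ _ H0). lra. Qed.

Lemma Pinv_incr : forall p p', 0 < p < 1 -> 0 < p' < 1 -> p < p' -> Phi_inv p < Phi_inv p'.
Proof.
  intros p p' H1 H2 H. destruct (Rle_or_lt (Phi_inv p') (Phi_inv p)); auto.
  pose proof (Pf_le _ _ H0). rewrite !Pinv_spec in H3 by auto. lra.
Qed.

Lemma Pinv_le : forall p p', 0 < p < 1 -> 0 < p' < 1 -> p <= p' -> Phi_inv p <= Phi_inv p'.
Proof. intros. destruct (Rle_lt_or_eq_dec _ _ H1). left; apply Pinv_incr; auto. subst; lra. Qed.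

Lemma Pinv_deriv : forall p, 0 < p < 1 -> derivable_pt_lim Phi_inv p (/ phi_density (Phi_inv p)).
Proof.
  intros p Hp.
  set (lb := p / 2). set (ub := (1 + p) / 2).
  assert (Hlb : 0 < lb < 1) by (unfold lb; lra). assert (Hub : 0 < ub < 1) by (unfold ub; lra).
  assert (Hlp : lb < p) by (unfold lb; lra). assert (Hpu : p < ub) by (unfold ub; lra).
  assert (Prf : forall a, Phi_inv lb <= a <= Phi_inv ub -> derivable_pt Pf a).
  { intros a _. exists (phi_density a). apply Pf_deriv. }
  assert (Hinc : Phi_inv lb <= Phi_inv p <= Phi_inv ub).
  { split; apply Pinv_le; lra. }
  assert (Hcont : continuity_pt Phi_inv p).
  { apply (continuity_pt_recip_interv Pf Phi_inv (Phi_inv lb) (Phi_inv ub)).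
    - apply Pinv_incr; lra.
    - intros; apply Pf_incr; auto.
    - intros x Hx1 Hx2. rewrite Pinv_spec in Hx1, Hx2 by auto. unfold comp, id. apply Pinv_spec. lra.
    - intros x Hx1 Hx2. rewrite Pinv_spec in Hx1, Hx2 by auto. split; apply Pinv_le; lra.
    - intros; apply Pf_cont.
    - rewrite !Pinv_spec by auto. lra. }
  assert (H := derivable_pt_lim_recip_interv Pf Phi_inv lb ub p Prf Hcont ltac:(lra) ltac:(lra) Hinc).
  assert (E : derive_pt Pf (Phi_inv p) (Prf (Phi_inv p) Hinc) = phi_density (Phi_inv p)).
  { apply derive_pt_eq_0. apply Pf_deriv. }
  rewrite E in H. pose proof (phi_pos (Phi_inv p)).
  eapply dpl_eq. apply H.
  - intros x Hx. unfold comp, id. apply Pinv_spec. lra.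
  - lra.
  - field. lra.
Qed.

Definition qt (M x : R) := exp (- M * Phi_inv x - M * M / 2).
Definition Qt (M x : R) := Pf (M + Phi_inv x).

Lemma phi_ratio : forall M y, phi_density (M + y) * / phi_density y = exp (- M * y - M * M / 2).
Proof.
  intros M y. unfold phi_density.
  assert (0 < / sqrt (2 * PI)) by (apply Rinv_0_lt_compat, sqrt_lt_R0; pose proof PI_RGT_0; lra).
  set (c := / sqrt (2 * PI)).
  pose proof (exp_pos (- y ^ 2 / 2)).
  replace (c * exp (- (M + y) ^ 2 / 2) * / (c * exp (- y ^ 2 / 2))) with (exp (- (M + y) ^ 2 / 2) * / exp (- y ^ 2 / 2)). 2:{ field. split; apply Rgt_not_eq; assumption. }

  rewrite <- exp_Ropp, <- exp_plus. f_equal. field.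
Qed.

Lemma Qt_deriv : forall M x, 0 < x < 1 -> derivable_pt_lim (Qt M) x (qt M x).
Proof.
  intros M x Hx. unfold Qt, qt.
  eapply dpl_eq.
  - apply (derivable_pt_lim_comp (fun x => M + Phi_inv x) Pf).
    + apply (derivable_pt_lim_plus (fun _ => M) Phi_inv). apply derivable_pt_lim_const. apply Pinv_deriv; auto.
    + apply Pf_deriv.
  - rewrite <- phi_ratio. ring.
Qed.

Lemma qBS_eq : forall mu r sigma dt x, 0 < x < 1 ->
  qBS mu r sigma dt x = qt (Mpar mu r sigma dt) x.
Proof.
  intros mu r sigma dt x Hx.
  assert (EQ : Qfun mu r sigma dt = Qt (Mpar mu r sigma dt)).
  { apply functional_extensionality. intros y. unfold Qfun, Qt. rewrite Phi_eq. reflexivity. }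
  unfold qBS, deriv_val. rewrite EQ.
  apply (uniqueness_limite (Qt (Mpar mu r sigma dt)) x).
  - apply (choose_spec (derivable_pt_lim (Qt (Mpar mu r sigma dt)) x)). eexists. apply Qt_deriv; auto.
  - apply Qt_deriv; auto.
Qed.

Lemma qt_pos : forall M x, 0 < qt M x.
Proof. intros; apply exp_pos. Qed.

Lemma qt_anti : forall M x x', 0 <= M -> 0 < x < 1 -> 0 < x' < 1 -> x <= x' -> qt M x' <= qt M x.
Proof.
  intros M x x' HM Hx Hx' H. unfold qt. apply exp_le_mono.
  pose proof (Pinv_le x x' Hx Hx' H). nra.
Qed.

Lemma Pinv_cont : forall p, 0 < p < 1 -> continuity_pt Phi_inv p.
Proof. intros. eapply cont_of_dpl. apply Pinv_deriv; auto. Qed.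

Lemma qt_cont : forall M x, 0 < x < 1 -> continuity_pt (qt M) x.
Proof.
  intros M x Hx. unfold qt.
  apply (continuity_pt_comp (fun x => - M * Phi_inv x - M * M / 2) exp).
  - apply (continuity_pt_minus (fun x => - M * Phi_inv x) (fun _ => M * M / 2)).
    + apply (continuity_pt_scal Phi_inv (- M)). apply Pinv_cont; auto.
    + apply continuity_pt_const. intros u v; reflexivity.
  - apply derivable_continuous_pt, derivable_exp.
Qed.

Lemma Qt_range : forall M x, 0 < Qt M x < 1.
Proof. intros; apply Pf_range. Qed.

Lemma Qt_mono : forall M x x', 0 < x < 1 -> 0 < x' < 1 -> x <= x' -> Qt M x <= Qt M x'.
Proof. intros. unfold Qt. apply Pf_le. pose proof (Pinv_le x x' H H0 H1). lra. Qed.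

Definition vgood (N : nat) (xs : nat -> R) (v : R -> R) : Prop :=
  (1 <= N)%nat /\ (forall i, (S i < N)%nat -> xs i < xs (S i)) /\
  (forall i, (S i < N)%nat -> exists a b, forall y, xs i <= y <= xs (S i) -> v y = a * y + b) /\
  (forall y, xs (N - 1)%nat <= y -> v y = v (xs (N - 1)%nat)).

Lemma grid_lt : forall N xs, (forall i, (S i < N)%nat -> xs i < xs (S i)) ->
  forall i j, (i < j)%nat -> (j < N)%nat -> xs i < xs j.
Proof.
  intros N xs H i j. induction j; intros Hij HjN. lia.
  destruct (Nat.eq_dec i j). subst. apply H; lia.
  apply Rlt_trans with (xs j). apply IHj; lia. apply H; lia.
Qed.

Lemma grid_le : forall N xs, (forall i, (S i < N)%nat -> xs i < xs (S i)) ->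
  forall i j, (i <= j)%nat -> (j < N)%nat -> xs i <= xs j.
Proof.
  intros. destruct (Nat.eq_dec i j). subst; lra. left; eapply grid_lt; eauto; lia.
Qed.

Lemma locate_aux : forall N xs, (forall i, (S i < N)%nat -> xs i < xs (S i)) ->
  forall y, xs 0%nat <= y -> forall k, (k < N)%nat -> y <= xs k ->
  y = xs 0%nat \/ exists i, (S i <= k)%nat /\ xs i <= y <= xs (S i).
Proof.
  intros N xs H y Hy k. induction k; intros Hk Hyk.
  - left; lra.
  - destruct (Rle_or_lt y (xs k)).
    + destruct (IHk ltac:(lia) H0) as [E | [i [Hi Hi2]]]. left; auto. right; exists i; split; auto; lia.
    + right. exists k. split. lia. lra.
Qed.

Lemma locate : forall N xs, (1 <= N)%nat -> (forall i, (S i < N)%nat -> xs i < xs (S i)) ->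
  forall y, xs 0%nat <= y ->
  xs (N - 1)%nat <= y \/ exists i, (S i < N)%nat /\ xs i <= y <= xs (S i).
Proof.
  intros N xs HN H y Hy. destruct (Rle_or_lt (xs (N - 1)%nat) y). left; auto.
  destruct (locate_aux N xs H y Hy (N - 1)%nat ltac:(lia) ltac:(lra)) as [E | [i [Hi Hi2]]].
  - destruct (Nat.eq_dec N 1). subst. simpl in H0. lra.
    right. exists 0%nat. split. lia. split. lra. left. rewrite E. apply H. lia.
  - right. exists i. split. lia. auto.
Qed.

Definition Sp (x1 : R) (v : R -> R) (p : R) := fun x => superdiff (fun y => x1 <= y) v x p.

Lemma argmax_nat : forall (F : nat -> R) n, (1 <= n)%nat -> exists k, (k < n)%nat /\ forall j, (j < n)%nat -> F j <= F k.
Proof.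
  intros F n Hn. induction n. lia.
  destruct (Nat.eq_dec n 0). subst. exists 0%nat. split. lia. intros j Hj. assert (j = 0%nat) by lia. subst; lra.
  destruct (IHn ltac:(lia)) as [k [Hk Hm]].
  destruct (Rle_or_lt (F n) (F k)).
  - exists k. split. lia. intros j Hj. destruct (Nat.eq_dec j n). subst; auto. apply Hm; lia.
  - exists n. split. lia. intros j Hj. destruct (Nat.eq_dec j n). subst; lra. pose proof (Hm j ltac:(lia)). lra.
Qed.

Lemma Sp_nonempty : forall N xs v, vgood N xs v -> forall p, 0 <= p ->
  exists k, (k < N)%nat /\ Sp (xs 0%nat) v p (xs k).
Proof.
  intros N xs v [HN [Hg [Hpl Hc]]] p Hp.
  destruct (argmax_nat (fun k => v (xs k) - p * xs k) N HN) as [k [Hk Hm]].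
  exists k. split; auto. split. apply (grid_le N xs Hg); lia.
  intros y Hy. destruct (locate N xs HN Hg y Hy) as [Hl | [i [Hi [Hy1 Hy2]]]].
  - rewrite (Hc y Hl). pose proof (Hm (N - 1)%nat ltac:(lia)). simpl in H. nra.
  - destruct (Hpl i Hi) as [a [b Hab]].
    pose proof (Hm i ltac:(lia)). pose proof (Hm (S i) ltac:(lia)). simpl in H, H0.
    rewrite (Hab y) in * by lra. rewrite (Hab (xs i)) in H by lra. rewrite (Hab (xs (S i))) in H0 by lra.
    destruct (Rle_or_lt 0 (a - p)); nra.
Qed.

Lemma is_inf_unique : forall E m m', is_inf E m -> is_inf E m' -> m = m'.
Proof. intros E m m' [A B] [C D]. apply Rle_antisym. apply D, A. apply B, C. Qed.

Lemma is_inf_exists : forall (E : R -> Prop) lb, (forall x, E x -> lb <= x) -> (exists x, E x) -> exists m, is_inf E m.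
Proof.
  intros E lb Hlb [x0 Hx0].
  destruct (completeness (fun y => E (- y))) as [l [Hub Hlub]].
  - exists (- lb). intros y Hy. specialize (Hlb _ Hy). lra.
  - exists (- x0). rewrite Ropp_involutive. auto.
  - exists (- l). split.
    + intros x Hx. assert (- x <= l) by (apply Hub; rewrite Ropp_involutive; auto). lra.
    + intros b Hb. assert (l <= - b). { apply Hlub. intros y Hy. specialize (Hb _ Hy). lra. } lra.
Qed.

Lemma Rinf_eq : forall E m, is_inf E m -> Rinf E = m.
Proof.
  intros E m H. unfold Rinf, choose_R. apply (is_inf_unique E). 2: exact H.
  apply epsilon_spec. exists m; auto.
Qed.

Lemma dagger_is_inf : forall N xs v, vgood N xs v -> forall p, 0 <= p ->
  is_inf (Sp (xs 0%nat) v p) (dagger (fun y => xs 0%nat <= y) v p).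
Proof.
  intros N xs v Hv p Hp.
  destruct (is_inf_exists (Sp (xs 0%nat) v p) (xs 0%nat)) as [m Hm].
  - intros x [Hx _]. auto.
  - destruct (Sp_nonempty N xs v Hv p Hp) as [k [_ Hk]]. eexists; eauto.
  - unfold dagger. fold (Sp (xs 0%nat) v p). rewrite (Rinf_eq _ m Hm). auto.
Qed.

Lemma inf_not_in_region : forall x1 v p m lo hi a b,
  is_inf (Sp x1 v p) m -> x1 <= lo -> lo < m < hi ->
  (forall w, lo <= w <= hi -> v w = a * w + b) -> False.
Proof.
  intros x1 v p m lo hi a b [Hlb Hglb] Hlo Hm Hlin.
  assert (Hz : exists z, Sp x1 v p z /\ z < (m + hi) / 2).
  { apply NNPP. intros Hn. assert ((m + hi) / 2 <= m).
    { apply Hglb. intros x Hx. destruct (Rle_or_lt ((m + hi) / 2) x); auto.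
      exfalso; apply Hn; exists x; auto. } lra. }
  destruct Hz as [z [Hz Hz2]]. pose proof (Hlb z Hz) as Hmz.
  destruct Hz as [Dz Hsz].
  set (d := Rmin (hi - z) (z - lo) / 2).
  assert (Hd : 0 < d) by (unfold d; apply Rmin_case; lra).
  assert (Hd1 : d <= (hi - z) / 2) by (unfold d; pose proof (Rmin_l (hi - z) (z - lo)); lra).
  assert (Hd2 : d <= (z - lo) / 2) by (unfold d; pose proof (Rmin_r (hi - z) (z - lo)); lra).
  assert (Hp : p = a).
  { pose proof (Hsz (z + d) ltac:(lra)). pose proof (Hsz (z - d) ltac:(lra)).
    rewrite !Hlin in H, H0 by lra. nra. }
  set (w := (lo + m) / 2).
  assert (Sp x1 v p w).
  { split. unfold w; lra. intros y Hy. pose proof (Hsz y Hy).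
    rewrite (Hlin z) in H by lra. rewrite (Hlin w) by (unfold w; lra). subst p. lra. }
  pose proof (Hlb w H). unfold w in H0. lra.
Qed.

Lemma dagger_grid : forall N xs v, vgood N xs v -> forall p, 0 <= p ->
  exists k, (k < N)%nat /\ dagger (fun y => xs 0%nat <= y) v p = xs k.
Proof.
  intros N xs v Hv p Hp. pose proof (dagger_is_inf N xs v Hv p Hp) as Hi.
  set (m := dagger (fun y => xs 0%nat <= y) v p) in *.
  destruct Hv as [HN [Hg [Hpl Hc]]].
  assert (Hm0 : xs 0%nat <= m).
  { destruct Hi as [_ Hglb]. apply Hglb. intros x [Hx _]; auto. }
  apply NNPP. intros Hn.
  assert (Hne : forall k, (k < N)%nat -> m <> xs k) by (intros k Hk E; apply Hn; exists k; auto).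
  destruct (locate N xs HN Hg m Hm0) as [Hl | [i [Hi1 [Hy1 Hy2]]]].
  - assert (Hlt : xs (N - 1)%nat < m) by (destruct Hl; auto; exfalso; apply (Hne (N - 1)%nat); [lia | auto]).
    apply (inf_not_in_region _ v p m (xs (N - 1)%nat) (m + 1) 0 (v (xs (N - 1)%nat)) Hi).
    apply (grid_le N xs Hg); lia. lra. intros w Hw. rewrite Hc by lra. ring.
  - destruct (Hpl i Hi1) as [a [b Hab]].
    assert (xs i < m) by (destruct Hy1; auto; exfalso; apply (Hne i); [lia | auto]).
    assert (m < xs (S i)) by (destruct Hy2; auto; exfalso; apply (Hne (S i)); [lia | auto]).
    apply (inf_not_in_region _ v p m (xs i) (xs (S i)) a b Hi).
    apply (grid_le N xs Hg); lia. lra. auto.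
Qed.

Lemma dagger_anti : forall N xs v, vgood N xs v -> forall p1 p2, 0 <= p1 -> p1 <= p2 ->
  dagger (fun y => xs 0%nat <= y) v p2 <= dagger (fun y => xs 0%nat <= y) v p1.
Proof.
  intros N xs v Hv p1 p2 H1 H2.
  destruct (Rle_lt_or_eq_dec _ _ H2) as [Hlt | E]. 2:{ subst; lra. }
  pose proof (dagger_is_inf N xs v Hv p1 H1) as [A1 B1].
  pose proof (dagger_is_inf N xs v Hv p2 ltac:(lra)) as [A2 B2].
  apply B1. intros z1 Hz1.
  destruct (Sp_nonempty N xs v Hv p2 ltac:(lra)) as [k [_ Hz2]].
  apply Rle_trans with (xs k). apply A2; auto.
  destruct Hz1 as [D1 S1]. destruct Hz2 as [D2 S2].
  pose proof (S1 _ D2). pose proof (S2 _ D1).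
  destruct (Rle_or_lt (xs k) z1); auto. nra.
Qed.

Lemma exR_plus : forall f g a b, ex_RInt f a b -> ex_RInt g a b -> ex_RInt (fun x => f x + g x) a b.
Proof. intros. apply (@ex_RInt_plus R_NormedModule); auto. Qed.
Lemma exR_scal : forall c f a b, ex_RInt f a b -> ex_RInt (fun x => c * f x) a b.
Proof. intros. apply (@ex_RInt_scal R_NormedModule); auto. Qed.
Lemma RI_plus : forall f g a b, ex_RInt f a b -> ex_RInt g a b ->
  @eq R (RInt (fun x => f x + g x) a b) (RInt f a b + RInt g a b).
Proof. intros. apply (@RInt_plus R_CompleteNormedModule); auto. Qed.
Lemma RI_scal : forall c f a b, ex_RInt f a b -> @eq R (RInt (fun x => c * f x) a b) (c * RInt f a b).
Proof. intros. apply (@RInt_scal R_CompleteNormedModule); auto. Qed.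
Lemma RI_chasles : forall f a b c, ex_RInt f a b -> ex_RInt f b c -> @eq R (RInt f a b + RInt f b c) (RInt f a c).
Proof. intros. apply (@RInt_Chasles R_CompleteNormedModule); auto. Qed.
Lemma RI_const : forall c a b, @eq R (RInt (V:=R_CompleteNormedModule) (fun _ => c) a b) (c * (b - a)).
Proof. intros. rewrite RInt_const. unfold scal; simpl; unfold mult; simpl. ring. Qed.
Lemma exR_const : forall c a b, ex_RInt (V:=R_NormedModule) (fun _ => c) a b.
Proof. intros. apply (@ex_RInt_const R_NormedModule). Qed.

Definition Prim (g K : R -> R) := forall a b, 0 < a -> a <= b -> b < 1 -> ex_RInt g a b /\ @eq R (RInt g a b) (K b - K a).
Definition Lims (K : R -> R) (L0 L1 : R) :=
  (forall eps, 0 < eps -> exists d, 0 < d /\ forall x, 0 < x < d -> Rabs (K x - L0) < eps) /\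
  (forall eps, 0 < eps -> exists d, 0 < d /\ forall x, 1 - d < x < 1 -> Rabs (K x - L1) < eps).
Definition Good (g : R -> R) := exists K L0 L1, Prim g K /\ Lims K L0 L1.

Lemma Good_ext : forall g g', (forall x, 0 < x < 1 -> g x = g' x) -> Good g -> Good g'.
Proof.
  intros g g' E [K [L0 [L1 [HP HL]]]]. exists K, L0, L1. split; auto.
  intros a b Ha Hab Hb. destruct (HP a b Ha Hab Hb) as [Hex Hv].
  assert (E' : forall x, Rmin a b < x < Rmax a b -> g x = g' x).
  { intros x Hx. rewrite Rmin_left, Rmax_right in Hx by lra. apply E; lra. }
  split. eapply ex_RInt_ext. apply E'. auto.
  rewrite <- (RInt_ext g g' a b E'). auto.
Qed.

Lemma Lims_lin : forall K1 K2 c a0 a1 b0 b1, Lims K1 a0 a1 -> Lims K2 b0 b1 ->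
  Lims (fun x => K1 x + c * K2 x) (a0 + c * b0) (a1 + c * b1).
Proof.
  intros K1 K2 c a0 a1 b0 b1 [H1 H2] [H3 H4].
  assert (key : forall (u v : R) (A B : R -> R) (la lb : R) (P : R -> Prop),
     (forall eps, 0 < eps -> exists d, 0 < d /\ forall x, P x /\ (0 < d) -> True) -> True) by auto.
  clear key.
  split.
  - intros eps He. set (e := eps / (2 * (Rabs c + 1))).
    assert (0 < e) by (unfold e; apply Rdiv_lt_0_compat; [lra | pose proof (Rabs_pos c); lra]).
    destruct (H1 e H) as [d1 [Hd1 P1]]. destruct (H3 e H) as [d2 [Hd2 P2]].
    exists (Rmin d1 d2). split. apply Rmin_case; lra.
    intros x Hx. pose proof (Rmin_l d1 d2). pose proof (Rmin_r d1 d2).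
    specialize (P1 x ltac:(lra)). specialize (P2 x ltac:(lra)).
    replace (K1 x + c * K2 x - (a0 + c * b0)) with ((K1 x - a0) + c * (K2 x - b0)) by ring.
    eapply Rle_lt_trans. apply Rabs_triang. rewrite Rabs_mult.
    assert (Rabs c * Rabs (K2 x - b0) <= (Rabs c + 1) * e).
    { apply Rmult_le_compat. apply Rabs_pos. apply Rabs_pos. lra. lra. }
    assert ((Rabs c + 1) * e = eps / 2). { unfold e. field. pose proof (Rabs_pos c); lra. }
    assert (e <= eps / 2). { unfold e. unfold Rdiv. apply Rmult_le_compat_l. lra.
      apply Rinv_le_contravar. lra. pose proof (Rabs_pos c); lra. }
    lra.
  - intros eps He. set (e := eps / (2 * (Rabs c + 1))).
    assert (0 < e) by (unfold e; apply Rdiv_lt_0_compat; [lra | pose proof (Rabs_pos c); lra]).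
    destruct (H2 e H) as [d1 [Hd1 P1]]. destruct (H4 e H) as [d2 [Hd2 P2]].
    exists (Rmin d1 d2). split. apply Rmin_case; lra.
    intros x Hx. pose proof (Rmin_l d1 d2). pose proof (Rmin_r d1 d2).
    specialize (P1 x ltac:(lra)). specialize (P2 x ltac:(lra)).
    replace (K1 x + c * K2 x - (a1 + c * b1)) with ((K1 x - a1) + c * (K2 x - b1)) by ring.
    eapply Rle_lt_trans. apply Rabs_triang. rewrite Rabs_mult.
    assert (Rabs c * Rabs (K2 x - b1) <= (Rabs c + 1) * e).
    { apply Rmult_le_compat. apply Rabs_pos. apply Rabs_pos. lra. lra. }
    assert ((Rabs c + 1) * e = eps / 2). { unfold e. field. pose proof (Rabs_pos c); lra. }
    assert (e <= eps / 2). { unfold e. unfold Rdiv. apply Rmult_le_compat_l. lra.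
      apply Rinv_le_contravar. lra. pose proof (Rabs_pos c); lra. }
    lra.
Qed.

Lemma Good_lin : forall g1 g2 c, Good g1 -> Good g2 -> Good (fun x => g1 x + c * g2 x).
Proof.
  intros g1 g2 c [K1 [a0 [a1 [P1 L1]]]] [K2 [b0 [b1 [P2 L2]]]].
  exists (fun x => K1 x + c * K2 x), (a0 + c * b0), (a1 + c * b1). split.
  - intros a b Ha Hab Hb. destruct (P1 a b Ha Hab Hb) as [E1 V1]. destruct (P2 a b Ha Hab Hb) as [E2 V2].
    assert (E3 : ex_RInt (fun x => c * g2 x) a b) by (apply exR_scal; auto).
    split. apply exR_plus; auto.
    rewrite (RI_plus g1 (fun x => c * g2 x)) by auto. rewrite RI_scal by auto. rewrite V1, V2. ring.
  - apply Lims_lin; auto.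
Qed.

Lemma Good_const : forall c, Good (fun _ => c).
Proof.
  intros c. exists (fun x => c * x), 0, c. split.
  - intros a b _ _ _. split. apply exR_const. rewrite RI_const. ring.
  - split.
    + intros eps He. exists (eps / (Rabs c + 1)). split. apply Rdiv_lt_0_compat; [lra | pose proof (Rabs_pos c); lra].
      intros x Hx. rewrite Rminus_0_r, Rabs_mult, (Rabs_pos_eq x) by lra.
      pose proof (Rabs_pos c).
      apply Rle_lt_trans with ((Rabs c + 1) * x). nra.
      replace eps with ((Rabs c + 1) * (eps / (Rabs c + 1))) by (field; lra).
      apply Rmult_lt_compat_l; lra.
    + intros eps He. exists (eps / (Rabs c + 1)). split. apply Rdiv_lt_0_compat; [lra | pose proof (Rabs_pos c); lra].
      intros x Hx. replace (c * x - c) with (c * (x - 1)) by ring. rewrite Rabs_mult, (Rabs_left1 (x - 1)) by lra.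
      pose proof (Rabs_pos c).
      apply Rle_lt_trans with ((Rabs c + 1) * (1 - x)). nra.
      replace eps with ((Rabs c + 1) * (eps / (Rabs c + 1))) by (field; lra).
      apply Rmult_lt_compat_l; lra.
Qed.

Lemma threshold : forall (f : R -> R) z,
  (forall x x', 0 < x < 1 -> 0 < x' < 1 -> x <= x' -> f x <= f x') ->
  exists t, forall x, 0 < x < 1 -> (x < t -> ~ z <= f x) /\ (t < x -> z <= f x).
Proof.
  intros f z Hf.
  destruct (classic (exists x, 0 < x < 1 /\ z <= f x)) as [Hex | Hno].
  - destruct (is_inf_exists (fun x => 0 < x < 1 /\ z <= f x) 0) as [t [Hlb Hglb]].
    + intros x [Hx _]; lra.
    + auto.
    + exists t. intros x Hx. split.
      * intros Hxt Hz. pose proof (Hlb x (conj Hx Hz)). lra.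
      * intros Htx. apply NNPP. intros Hn.
        assert (x <= t).
        { apply Hglb. intros e [He Hze]. destruct (Rle_or_lt x e); auto.
          exfalso. apply Hn. apply Rle_trans with (f e); auto. apply Hf; auto; lra. }
        lra.
  - exists 1. intros x Hx. split.
    + intros _ Hz. apply Hno. exists x; auto.
    + intros; lra.
Qed.

Definition indf (f g : R -> R) (z : R) := fun x => if Rle_dec z (f x) then g x else 0.

Lemma Good_ind : forall f g z,
  (forall x x', 0 < x < 1 -> 0 < x' < 1 -> x <= x' -> f x <= f x') ->
  Good g -> Good (indf f g z).
Proof.
  intros f g z Hf [K [L0 [L1 [HP [HL0 HL1]]]]].
  destruct (threshold f z Hf) as [t Ht].
  assert (Hlo : forall x, 0 < x < 1 -> x < t -> indf f g z x = 0).
  { intros x Hx Hxt. unfold indf. destruct (Rle_dec z (f x)); auto. exfalso; apply (proj1 (Ht x Hx)); auto. }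
  assert (Hhi : forall x, 0 < x < 1 -> t < x -> indf f g z x = g x).
  { intros x Hx Hxt. unfold indf. destruct (Rle_dec z (f x)); auto. exfalso; apply n, (proj2 (Ht x Hx)); auto. }
  exists (fun x => K (Rmax x t)).
  exists (if Rle_dec t 0 then L0 else K t). exists (if Rlt_dec t 1 then L1 else K t).
  split; [|split].
  - intros a b Ha Hab Hb.
    destruct (Rle_or_lt b t) as [Hbt | Htb].
    + assert (E : forall x, Rmin a b < x < Rmax a b -> indf f g z x = 0).
      { intros x Hx. rewrite Rmin_left, Rmax_right in Hx by lra. apply Hlo; lra. }
      split. eapply ex_RInt_ext. intros x Hx; symmetry; apply E; auto. apply exR_const.
      rewrite (RInt_ext _ _ a b E). rewrite RI_const. rewrite !Rmax_right by lra. ring.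
    + destruct (Rle_or_lt t a) as [Hta | Hat].
      * assert (E : forall x, Rmin a b < x < Rmax a b -> g x = indf f g z x).
        { intros x Hx. rewrite Rmin_left, Rmax_right in Hx by lra. symmetry; apply Hhi; lra. }
        destruct (HP a b Ha Hab Hb) as [Hex Hv].
        split. eapply ex_RInt_ext. apply E. auto.
        rewrite <- (RInt_ext _ _ a b E). rewrite Hv. rewrite !Rmax_left by lra. ring.
      * assert (E1 : forall x, Rmin a t < x < Rmax a t -> indf f g z x = 0).
        { intros x Hx. rewrite Rmin_left, Rmax_right in Hx by lra. apply Hlo; lra. }
        assert (E2 : forall x, Rmin t b < x < Rmax t b -> g x = indf f g z x).
        { intros x Hx. rewrite Rmin_left, Rmax_right in Hx by lra. symmetry; apply Hhi; lra. }
        destruct (HP t b ltac:(lra) ltac:(lra) Hb) as [Hex Hv].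
        assert (X1 : ex_RInt (indf f g z) a t).
        { eapply ex_RInt_ext. intros x Hx; symmetry; apply E1; auto. apply exR_const. }
        assert (X2 : ex_RInt (indf f g z) t b) by (eapply ex_RInt_ext; [apply E2 | auto]).
        split. eapply (@ex_RInt_Chasles R_NormedModule); eauto.
        rewrite <- (RI_chasles (indf f g z) a t b X1 X2).
        rewrite (RInt_ext _ _ a t E1), <- (RInt_ext _ _ t b E2), RI_const, Hv.
        rewrite (Rmax_left b t), (Rmax_right a t) by lra. replace (Rmax t t) with t by (unfold Rmax; destruct (Rle_dec t t); lra). ring.
  - destruct (Rle_dec t 0) as [Ht0 | Ht0].
    + intros eps He. destruct (HL0 eps He) as [d [Hd Hdd]]. exists d. split; auto.
      intros x Hx. rewrite Rmax_left by lra. auto.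
    + intros eps He. exists t. split. lra. intros x Hx. rewrite Rmax_right by lra.
      rewrite Rminus_diag, Rabs_R0. auto.
  - destruct (Rlt_dec t 1) as [Ht1 | Ht1].
    + intros eps He. destruct (HL1 eps He) as [d [Hd Hdd]]. exists (Rmin d (1 - t)). split.
      apply Rmin_case; lra.
      intros x Hx. pose proof (Rmin_l d (1 - t)). pose proof (Rmin_r d (1 - t)).
      rewrite Rmax_left by lra. apply Hdd. lra.
    + intros eps He. exists 1. split. lra. intros x Hx. rewrite Rmax_right by lra.
      rewrite Rminus_diag, Rabs_R0. auto.
Qed.

Lemma Lims_pick : forall K L0 L1, Lims K L0 L1 -> forall eps, 0 < eps ->
  exists d, 0 < d <= 1/4 /\ forall a b, 0 < a < d -> 1 - d < b < 1 -> Rabs (K b - K a - (L1 - L0)) < 2 * eps.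
Proof.
  intros K L0 L1 [H0 H1] eps He.
  destruct (H0 eps He) as [d0 [Hd0 P0]]. destruct (H1 eps He) as [d1 [Hd1 P1]].
  exists (Rmin (Rmin d0 d1) (1/4)). 
  pose proof (Rmin_l (Rmin d0 d1) (1/4)). pose proof (Rmin_r (Rmin d0 d1) (1/4)).
  pose proof (Rmin_l d0 d1). pose proof (Rmin_r d0 d1).
  split. split. repeat apply Rmin_case; lra. auto.
  intros a b Ha Hb. specialize (P0 a ltac:(lra)). specialize (P1 b ltac:(lra)).
  replace (K b - K a - (L1 - L0)) with ((K b - L1) - (K a - L0)) by ring.
  eapply Rle_lt_trans. apply Rabs_triang. rewrite Rabs_Ropp. lra.
Qed.

Lemma improper_unique : forall g l l', improper_int g 0 1 l -> improper_int g 0 1 l' -> l = l'.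
Proof.
  intros g l l' H1 H2. apply close_eq. intros eps He.
  destruct (H1 eps He) as [d1 [Hd1 P1]]. destruct (H2 eps He) as [d2 [Hd2 P2]].
  set (d := Rmin (Rmin d1 d2) 1).
  assert (0 < d) by (unfold d; repeat apply Rmin_case; lra).
  pose proof (Rmin_l (Rmin d1 d2) 1). pose proof (Rmin_r (Rmin d1 d2) 1).
  pose proof (Rmin_l d1 d2). pose proof (Rmin_r d1 d2). fold d in H0, H3.
  destruct (P1 (d / 2) (1 - d / 2)) as [pr1 E1]. lra. lra.
  destruct (P2 (d / 2) (1 - d / 2)) as [pr2 E2]. lra. lra.
  rewrite (RiemannInt_P5 pr1 pr2) in E1.
  replace (l - l') with (- (RiemannInt pr2 - l) + (RiemannInt pr2 - l')) by ring.
  eapply Rle_lt_trans. apply Rabs_triang. rewrite Rabs_Ropp. lra.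
Qed.

Lemma Good_improper : forall g K L0 L1, Prim g K -> Lims K L0 L1 -> improper_int g 0 1 (L1 - L0).
Proof.
  intros g K L0 L1 HP HL eps He.
  destruct (Lims_pick K L0 L1 HL (eps / 2) ltac:(lra)) as [d [Hd P]].
  exists d. split. lra. intros a' b' Ha Hb.
  replace (0 + d) with d in Ha by ring.
  destruct (HP a' b' ltac:(lra) ltac:(lra) ltac:(lra)) as [Hex Hv].
  exists (ex_RInt_Reals_0 _ _ _ Hex). rewrite <- RInt_Reals. rewrite Hv.
  replace eps with (2 * (eps / 2)) by field. apply P; lra.
Qed.

Lemma Good_Int : forall g K L0 L1, Prim g K -> Lims K L0 L1 -> Int g 0 1 = L1 - L0.
Proof.
  intros g K L0 L1 HP HL. unfold Int.
  apply (improper_unique g). apply choose_spec. eexists. eapply Good_improper; eauto.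
  eapply Good_improper; eauto.
Qed.

Lemma le_eps : forall x y, (forall eps, 0 < eps -> x <= y + eps) -> x <= y.
Proof. intros x y H. destruct (Rle_or_lt x y); auto. specialize (H ((x - y) / 2) ltac:(lra)). lra. Qed.

Lemma Good_Int_le : forall g B, Good g -> (forall a b, 0 < a -> a <= b -> b < 1 -> RInt g a b <= B) -> Int g 0 1 <= B.
Proof.
  intros g B [K [L0 [L1 [HP HL]]]] HB. rewrite (Good_Int g K L0 L1 HP HL).
  apply le_eps. intros eps He.
  destruct (Lims_pick K L0 L1 HL (eps / 2) ltac:(lra)) as [d [Hd P]].
  specialize (P (d / 2) (1 - d / 2) ltac:(lra) ltac:(lra)).
  destruct (HP (d / 2) (1 - d / 2) ltac:(lra) ltac:(lra) ltac:(lra)) as [_ Hv].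
  pose proof (HB (d / 2) (1 - d / 2) ltac:(lra) ltac:(lra) ltac:(lra)). rewrite Hv in H.
  apply Rabs_def2 in P. lra.
Qed.

Lemma Good_Int_ge : forall g B, Good g -> (forall a b, 0 < a -> a <= b -> b < 1 -> B <= RInt g a b) -> B <= Int g 0 1.
Proof.
  intros g B [K [L0 [L1 [HP HL]]]] HB. rewrite (Good_Int g K L0 L1 HP HL).
  apply le_eps. intros eps He.
  destruct (Lims_pick K L0 L1 HL (eps / 2) ltac:(lra)) as [d [Hd P]].
  specialize (P (d / 2) (1 - d / 2) ltac:(lra) ltac:(lra)).
  destruct (HP (d / 2) (1 - d / 2) ltac:(lra) ltac:(lra) ltac:(lra)) as [_ Hv].
  pose proof (HB (d / 2) (1 - d / 2) ltac:(lra) ltac:(lra) ltac:(lra)). rewrite Hv in H.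
  apply Rabs_def2 in P. lra.
Qed.

Fixpoint sumF (F : nat -> R -> R) (n : nat) (x : R) : R :=
  match n with O => 0 | S m => sumF F m x + F m x end.

Lemma Good_sum : forall F n, (forall j, (j < n)%nat -> Good (F j)) -> Good (sumF F n).
Proof.
  intros F n. induction n; intros H.
  - eapply Good_ext. 2: apply (Good_const 0). intros; reflexivity.
  - eapply Good_ext. 2: apply (Good_lin (sumF F n) (F n) 1). intros x _. simpl. ring.
    apply IHn; intros; apply H; lia. apply H; lia.
Qed.

Lemma mono_lims : forall K lo hi, (forall x x', 0 < x < 1 -> 0 < x' < 1 -> x <= x' -> K x <= K x') ->
  (forall x, 0 < x < 1 -> lo <= K x <= hi) -> exists L0 L1, Lims K L0 L1.
Proof.
  intros K lo hi Hm Hb.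
  destruct (is_inf_exists (fun y => exists x, 0 < x < 1 /\ y = K x) lo) as [L0 [A0 B0]].
  { intros y [x [Hx E]]. subst. apply Hb; auto. }
  { exists (K (1/2)), (1/2). split; auto. lra. }
  destruct (is_inf_exists (fun y => exists x, 0 < x < 1 /\ y = - K x) (- hi)) as [M1 [A1 B1]].
  { intros y [x [Hx E]]. subst. pose proof (Hb x Hx). lra. }
  { exists (- K (1/2)), (1/2). split; auto. lra. }
  exists L0, (- M1). split.
  - intros eps He.
    assert (Hx : exists x, 0 < x < 1 /\ K x < L0 + eps).
    { apply NNPP; intros Hn. assert (L0 + eps <= L0). apply B0. intros y [x [Hx E]]. subst.
      destruct (Rle_or_lt (L0 + eps) (K x)); auto. exfalso; apply Hn; exists x; auto. lra. }
    destruct Hx as [x0 [Hx0 Hk]]. exists x0. split. lra. intros x Hx.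
    assert (Hx' : 0 < x < 1) by lra.
    pose proof (Hm x x0 Hx' Hx0 ltac:(lra)). pose proof (A0 (K x) (ex_intro _ x (conj Hx' eq_refl))).
    apply Rabs_def1; lra.
  - intros eps He.
    assert (Hx : exists x, 0 < x < 1 /\ - K x < M1 + eps).
    { apply NNPP; intros Hn. assert (M1 + eps <= M1). apply B1. intros y [x [Hx E]]. subst.
      destruct (Rle_or_lt (M1 + eps) (- K x)); auto. exfalso; apply Hn; exists x; auto. lra. }
    destruct Hx as [x0 [Hx0 Hk]]. exists (1 - x0). split. lra. intros x Hx.
    assert (Hx' : 0 < x < 1) by lra.
    pose proof (Hm x0 x Hx0 Hx' ltac:(lra)). pose proof (A1 (- K x) (ex_intro _ x (conj Hx' eq_refl))).
    apply Rabs_def1; lra.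
Qed.

Lemma Good_scal : forall c h, Good h -> Good (fun x => c * h x).
Proof. intros. eapply Good_ext. 2: apply (Good_lin (fun _ => 0) h c); auto. intros; simpl; ring. apply Good_const. Qed.

Lemma Good_add : forall g h, Good g -> Good h -> Good (fun x => g x + h x).
Proof. intros. eapply Good_ext. 2: apply (Good_lin g h 1); auto. intros; simpl; ring. Qed.

Lemma Good_ex : forall g a b, Good g -> 0 < a -> a <= b -> b < 1 -> ex_RInt g a b.
Proof. intros g a b [K [L0 [L1 [HP _]]]] Ha Hab Hb. apply (HP a b Ha Hab Hb). Qed.

Lemma sumF_ind : forall (d : nat -> R) (z : nat -> R) f g n x,
  sumF (fun j x => d j * indf f g (z j) x) n x = g x * sumF (fun j x => d j * (if Rle_dec (z j) (f x) then 1 else 0)) n x.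
Proof.
  intros d z f g n x. induction n; simpl. ring. rewrite IHn. unfold indf. destruct (Rle_dec (z n) (f x)); ring.
Qed.

Lemma telescope : forall N xs (w : R -> R), (forall i, (S i < N)%nat -> xs i < xs (S i)) ->
  forall k, (k < N)%nat -> forall m, (m <= N - 1)%nat ->
  sumF (fun j y => (w (xs (S j)) - w (xs j)) * (if Rle_dec (xs (S j)) y then 1 else 0)) m (xs k)
  = w (xs (Nat.min k m)) - w (xs 0%nat).
Proof.
  intros N xs w Hg k Hk m. induction m; intros Hm.
  - simpl. rewrite Nat.min_0_r. ring.
  - simpl. rewrite IHm by lia. destruct (Rle_dec (xs (S m)) (xs k)) as [Hle | Hnle].
    + assert (S m <= k)%nat.
      { destruct (Compare_dec.le_lt_dec (S m) k); auto. pose proof (grid_lt N xs Hg k (S m) l ltac:(lia)). lra. }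
      rewrite (Nat.min_r k (S m)), (Nat.min_r k m) by lia. ring.
    + assert (k < S m)%nat.
      { destruct (Compare_dec.le_lt_dec (S m) k); auto. exfalso. apply Hnle. apply (grid_le N xs Hg); lia. }
      rewrite (Nat.min_l k (S m)), (Nat.min_l k m) by lia. ring.
Qed.

Lemma Good_qt : forall M, Good (qt M).
Proof.
  intros M. destruct (mono_lims (Qt M) 0 1) as [L0 [L1 HL]].
  - intros; apply Qt_mono; auto.
  - intros; pose proof (Qt_range M x); lra.
  - exists (Qt M), L0, L1. split; auto.
    intros a b Ha Hab Hb.
    assert (H : is_RInt (qt M) a b (minus (Qt M b) (Qt M a))).
    { apply (@is_RInt_derive R_CompleteNormedModule).
      - intros x Hx. rewrite Rmin_left, Rmax_right in Hx by lra. apply is_derive_Reals, Qt_deriv; lra.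
      - intros x Hx. rewrite Rmin_left, Rmax_right in Hx by lra.
        apply continuity_pt_filterlim, qt_cont; lra. }
    split. eexists; exact H. apply (@is_RInt_unique R_CompleteNormedModule) in H. rewrite H. reflexivity.
Qed.

Lemma Prim_qt : forall M, Prim (qt M) (Qt M).
Proof.
  intros M a b Ha Hab Hb.
  assert (H : is_RInt (qt M) a b (minus (Qt M b) (Qt M a))).
  { apply (@is_RInt_derive R_CompleteNormedModule).
    - intros x Hx. rewrite Rmin_left, Rmax_right in Hx by lra. apply is_derive_Reals, Qt_deriv; lra.
    - intros x Hx. rewrite Rmin_left, Rmax_right in Hx by lra.
      apply continuity_pt_filterlim, qt_cont; lra. }
  split. eexists; exact H. apply (@is_RInt_unique R_CompleteNormedModule) in H. rewrite H. reflexivity.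
Qed.

Definition fe (xs : nat -> R) (v : R -> R) (M c : R) (x : R) :=
  dagger (fun y => xs 0%nat <= y) v (c * qt M x).

Lemma fe_grid : forall N xs v M c, vgood N xs v -> 0 < c -> forall x,
  exists k, (k < N)%nat /\ fe xs v M c x = xs k.
Proof.
  intros. unfold fe. apply (dagger_grid N xs v H). pose proof (qt_pos M x). nra.
Qed.

Lemma fe_mono : forall N xs v M c, vgood N xs v -> 0 <= M -> 0 < c ->
  forall x x', 0 < x < 1 -> 0 < x' < 1 -> x <= x' -> fe xs v M c x <= fe xs v M c x'.
Proof.
  intros N xs v M c Hv HM Hc x x' Hx Hx' H. unfold fe.
  apply (dagger_anti N xs v Hv). pose proof (qt_pos M x'). nra.
  pose proof (qt_anti M x x' HM Hx Hx' H). nra.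
Qed.

Lemma fe_ge : forall N xs v M c, vgood N xs v -> 0 < c -> forall x, xs 0%nat <= fe xs v M c x.
Proof.
  intros N xs v M c Hv Hc x. destruct (fe_grid N xs v M c Hv Hc x) as [k [Hk E]]. rewrite E.
  destruct Hv as [_ [Hg _]]. apply (grid_le N xs Hg); lia.
Qed.

Lemma sumF_comp : forall (H : nat -> R -> R) (f : R -> R) n x,
  sumF (fun j y => H j (f y)) n x = sumF H n (f x).
Proof. intros. induction n; simpl; auto. rewrite IHn. auto. Qed.

Lemma Good_decomp : forall N xs v M c (w : R -> R) (g : R -> R), vgood N xs v -> 0 <= M -> 0 < c -> Good g ->
  Good (fun x => g x * w (fe xs v M c x)).
Proof.
  intros N xs v M c w g Hv HM Hc Hg.
  set (F := fun j x => (w (xs (S j)) - w (xs j)) * indf (fe xs v M c) g (xs (S j)) x).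
  eapply Good_ext.
  2: apply (Good_add (fun x => w (xs 0%nat) * g x) (sumF F (N - 1))).
  - intros x Hx. unfold F. rewrite sumF_ind.
    rewrite (sumF_comp (fun j y => (w (xs (S j)) - w (xs j)) * (if Rle_dec (xs (S j)) y then 1 else 0)) (fe xs v M c)).
    destruct (fe_grid N xs v M c Hv Hc x) as [k [Hk E]]. rewrite E.
    destruct Hv as [HN [Hgr _]].
    rewrite (telescope N xs w Hgr k Hk (N - 1) ltac:(lia)). rewrite Nat.min_l by lia. ring.
  - apply Good_scal; auto.
  - apply Good_sum. intros j Hj. unfold F. apply Good_scal. apply Good_ind; auto.
    intros; eapply fe_mono; eauto.
Qed.

Lemma Mpar_nonneg : forall mu r sigma dt, 0 < sigma -> 0 <= Mpar mu r sigma dt.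
Proof.
  intros. unfold Mpar. apply Rmult_le_pos. apply Rmult_le_pos. apply Rabs_pos. apply sqrt_pos.
  left; apply Rinv_0_lt_compat; auto.
Qed.

Theorem mainTheorem9
  (mu r sigma dt s : R) (C N : nat) (xs : nat -> R) (v u : R -> R)
  (Hsigma : 0 < sigma) (Hdt : 0 < dt) (Hs : 0 < s < 1)
  (HC : C = 0%nat \/ C = 1%nat)
  (HN : (1 <= N)%nat)
  (Hgrid : forall i, (S i < N)%nat -> xs i < xs (S i))
  (Hv_pl : forall i, (S i < N)%nat ->
     exists a b, forall y, xs i <= y <= xs (S i) -> v y = a * y + b)
  (Hv_concave : forall x y t, xs 0%nat <= x -> xs 0%nat <= y -> 0 <= t <= 1 ->
     t * v x + (1 - t) * v y <= v (t * x + (1 - t) * y))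
  (Hv_nonpos : forall y, xs 0%nat <= y -> v y <= 0)
  (Hv_incr : forall y z, xs 0%nat <= y -> y <= z -> v y <= v z)
  (Hv_const : forall y, xs (N - 1)%nat <= y -> v y = v (xs (N - 1)%nat))
  (Hu_concave : forall x y t, 0 <= t <= 1 ->
     t * u x + (1 - t) * u y <= u (t * x + (1 - t) * y))
  (Hu_incr : forall x y, x <= y -> u x <= u y)
  (Hud_cont : forall p, 0 < p -> continuity_pt (dagger fullR u) p)
  (Hud_lim : forall K, exists d, 0 < d /\
     forall p, 0 < p < d -> K < dagger fullR u p) :
  forall K, exists d, 0 < d /\
    forall eta, 0 < eta < d -> K < X_eta mu r sigma dt s C (xs 0%nat) v u eta.
Proof.
  intros K.
  assert (Hv : vgood N xs v) by (split; [|split; [|split]]; auto).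
  set (x1 := xs 0%nat). set (e := exp (- r * dt)). set (m := Rmin x1 0).
  set (M := Mpar mu r sigma dt).
  assert (HM : 0 <= M) by (apply Mpar_nonneg; auto).
  assert (He : 0 < e) by apply exp_pos.
  assert (Hm : m <= 0) by apply Rmin_r.
  assert (Hmx : m <= x1) by apply Rmin_l.
  destruct (Hud_lim (K - e * m)) as [d' [Hd' Hu]].
  exists (d' * dt * (1 - s)). split. apply Rmult_lt_0_compat. apply Rmult_lt_0_compat; auto. lra.
  intros eta Heta.
  set (c := eta * powerRZ s (Z.of_nat C - 1) * exp (- r * dt)).
  assert (Hc : 0 < c).
  { unfold c. apply Rmult_lt_0_compat. apply Rmult_lt_0_compat. lra. apply powerRZ_lt; lra. apply exp_pos. }
  assert (Hfe : forall x, 0 < x < 1 -> f_eta mu r sigma dt s C x1 v eta x = fe xs v M c x).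
  { intros x Hx. unfold f_eta, fe. rewrite qBS_eq by auto. reflexivity. }
  set (I1 := Int (fun x => 1 + v (f_eta mu r sigma dt s C x1 v eta x)) 0 1).
  assert (HI1 : I1 <= 1).
  { assert (HG : Good (fun x => 1 + v (f_eta mu r sigma dt s C x1 v eta x))).
    { eapply Good_ext. 2: apply (Good_add (fun _ => 1) (fun x => 1 * v (fe xs v M c x))).
      - intros x Hx. simpl. rewrite Hfe by auto. ring.
      - apply Good_const.
      - apply (Good_decomp N xs v M c v (fun _ => 1)); auto. apply Good_const. }
    apply Good_Int_le; auto.
    intros a b Ha Hab Hb. apply Rle_trans with (RInt (fun _ => 1) a b).
    - apply RInt_le; auto. apply (Good_ex _ a b HG); auto. apply exR_const.
      intros x Hx. rewrite Hfe by lra. pose proof (Hv_nonpos (fe xs v M c x) (fe_ge N xs v M c Hv Hc x)). lra.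
    - rewrite RI_const. lra. }
  set (I2 := Int (fun x => exp (- r * dt) * qBS mu r sigma dt x * f_eta mu r sigma dt s C x1 v eta x) 0 1).
  assert (HI2 : e * m <= I2).
  { assert (HG : Good (fun x => exp (- r * dt) * qBS mu r sigma dt x * f_eta mu r sigma dt s C x1 v eta x)).
    { eapply Good_ext. 2: apply (Good_scal e (fun x => qt M x * (fun y => y) (fe xs v M c x))).
      - intros x Hx. simpl. rewrite Hfe, qBS_eq by auto. fold M. fold e. ring.
      - apply (Good_decomp N xs v M c (fun y => y) (qt M)); auto. apply Good_qt. }
    apply Good_Int_ge; auto.
    intros a b Ha Hab Hb.
    assert (Hq : ex_RInt (qt M) a b) by (apply (Prim_qt M a b); auto).
    apply Rle_trans with (RInt (fun x => (e * m) * qt M x) a b).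
    - rewrite RI_scal by auto. destruct (Prim_qt M a b Ha Hab Hb) as [_ Hv2]. rewrite Hv2.
      pose proof (Qt_mono M a b ltac:(lra) ltac:(lra) Hab). pose proof (Qt_range M a). pose proof (Qt_range M b).
      assert (e * m <= 0) by nra. nra.
    - apply RInt_le; auto. apply exR_scal; auto. apply (Good_ex _ a b HG); auto.
      intros x Hx. rewrite Hfe, qBS_eq by lra. fold M. fold e.
      pose proof (qt_pos M x). pose proof (fe_ge N xs v M c Hv Hc x). fold x1 in H0.
      assert (0 <= e * qt M x) by nra. nra. }
  unfold X_eta, gamma_eta. fold x1. fold I1. fold I2.
  set (p := - (eta / dt) * / (-1 + s * I1)).
  assert (Hden : -1 + s * I1 <= -1 + s) by nra.
  assert (Hp0 : 0 < p).
  { unfold p. replace (- (eta / dt) * / (-1 + s * I1)) with ((eta / dt) * / (1 - s * I1)) by (field; lra).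
    apply Rmult_lt_0_compat. apply Rdiv_lt_0_compat; lra. apply Rinv_0_lt_compat; lra. }
  assert (Hpd : p < d').
  { unfold p. replace (- (eta / dt) * / (-1 + s * I1)) with ((eta / dt) * / (1 - s * I1)) by (field; lra).
    apply Rle_lt_trans with ((eta / dt) * / (1 - s)).
    - apply Rmult_le_compat_l. left; apply Rdiv_lt_0_compat; lra.
      apply Rinv_le_contravar; lra.
    - apply Rmult_lt_reg_r with (dt * (1 - s)). apply Rmult_lt_0_compat; lra.
      replace (eta / dt * / (1 - s) * (dt * (1 - s))) with eta by (field; lra). lra. }
  pose proof (Hu p (conj Hp0 Hpd)) as Hg.
  assert (HsC : 0 < s ^ C <= 1) by (destruct HC; subst; simpl; lra).
  assert (Hem : e * m <= 0) by nra.
  assert (0 <= s ^ C * (I2 - e * m)) by (apply Rmult_le_pos; lra).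
  assert (0 <= (1 - s ^ C) * (- (e * m))) by (apply Rmult_le_pos; lra).
  assert (s ^ C * I2 >= e * m) by nra.
  lra.
Qed.
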